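(* Let $n\ge2$, $1\le k\le n-1$, and let $X$ be a continuous random variable. Then \[ E[X(n)\mid X(n-k)=u,\ X(n+1)=v]=\frac{u+kv}{k+1}\qquad (l_F<u<v<r_F) \] if and only if $l_F>-\infty$, $r_F=\infty$ and $F(x)=1-e^{-c(x-l_F)}$ for $x\ge l_F$, for some constant $c>0$.
   Context: $X_1,X_2,\dots$ are i.i.d. copies of $X$ with distribution function $F$; $l_F=\inf\{x:F(x)>0\}$, $r_F=\sup\{x:F(x)<1\}$. Upper record times: $L(1)=1$, $L(m)=\min\{j>L(m-1): X_j>X_{L(m-1)}\}$; upper record values $X(m)=X_{L(m)}$. With $R(x)=-\ln(1-F(x))$, conditional expectations given $X(n-k)=u$, $X(n+r)=v$ are taken with respect to the conditional density $\frac{(k+r-1)!}{(k-1)!(r-1)!}[\frac{R(t)-R(u)}{R(v)-R(u)}]^{k-1}[\frac{R(v)-R(t)}{R(v)-R(u)}]^{r-1}\frac{R'(t)}{R(v)-R(u)}$, $u<t<v$. *)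

(* Defs.v *)
From Stdlib Require Import Reals Lra.
Open Scope R_scope.

Definition is_cdf (F : R -> R) : Prop :=
  (forall x y, x <= y -> F x <= F y) /\
  (forall x, forall eps, eps > 0 -> exists d, d > 0 /\
        forall y, x <= y < x + d -> Rabs (F y - F x) < eps) /\
  (forall eps, eps > 0 -> exists M, forall x, x <= M -> Rabs (F x) < eps) /\
  (forall eps, eps > 0 -> exists M, forall x, x >= M -> Rabs (F x - 1) < eps).

(* l_F = inf {x : F x > 0} (possibly -oo), r_F = sup {x : F x < 1} (possibly +oo). *)
Definition lF_lt (F : R -> R) (u : R) : Prop := exists x, x < u /\ F x > 0.
Definition lt_rF (F : R -> R) (v : R) : Prop := exists y, v < y /\ F y < 1.
(* "l_F = l" for a real number l (hence l_F > -oo). *)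
Definition is_lF (F : R -> R) (l : R) : Prop :=
  (forall x, F x > 0 -> l <= x) /\
  (forall m, (forall x, F x > 0 -> m <= x) -> m <= l).
Definition rF_infinite (F : R -> R) : Prop := forall x, exists y, x < y /\ F y < 1.

Definition Rhaz (F : R -> R) (x : R) : R := - ln (1 - F x).

Fixpoint rs_sum (g H : R -> R) (x xi : nat -> R) (N : nat) : R :=
  match N with
  | O => 0
  | S m => rs_sum g H x xi m + g (xi m) * (H (x (S m)) - H (x m))
  end.

Definition tagged_partition (a b : R) (x xi : nat -> R) (N : nat) (delta : R) : Prop :=
  (0 < N)%nat /\ x O = a /\ x N = b /\
  (forall i, (i < N)%nat -> x i < x (S i) /\ x i <= xi i <= x (S i)
                            /\ x (S i) - x i < delta).

Definition RS_integral (g H : R -> R) (a b I : R) : Prop :=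
  forall eps, eps > 0 -> exists delta, delta > 0 /\
    forall x xi N, tagged_partition a b x xi N delta ->
      Rabs (rs_sum g H x xi N - I) < eps.

(* Conditional distribution function of X(n) given X(n-k)=u, X(n+1)=v (i.e. r = 1):
   the antiderivative of the conditional density
   k [(R(t)-R(u))/(R(v)-R(u))]^(k-1) R'(t)/(R(v)-R(u)) on (u,v). *)
Definition cond_cdf (F : R -> R) (k : nat) (u v t : R) : R :=
  ((Rhaz F t - Rhaz F u) / (Rhaz F v - Rhaz F u)) ^ k.

(* E[X(n) | X(n-k)=u, X(n+1)=v] = m, i.e. m = int_u^v t dG(t) with G the conditional cdf. *)
Definition cond_exp_is (F : R -> R) (k : nat) (u v m : R) : Prop :=
  RS_integral (fun t => t) (cond_cdf F k u v) u v m.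

(* Main.v *)
Require Import Defs.
From Stdlib Require Import Reals Lra Lia.
Open Scope R_scope.

Fixpoint sm (f : nat -> R) (N : nat) : R :=
  match N with O => 0 | S m => sm f m + f m end.

Lemma rs_sum_sm g H x xi N :
  rs_sum g H x xi N = sm (fun i => g (xi i) * (H (x (S i)) - H (x i))) N.
Proof. induction N; simpl; auto; rewrite IHN; auto. Qed.

Lemma sm_ext f g N : (forall i, (i < N)%nat -> f i = g i) -> sm f N = sm g N.
Proof. induction N; intros H; simpl; auto. rewrite IHN by (intros; apply H; lia). rewrite H by lia; auto. Qed.

Lemma sm_le f g N : (forall i, (i < N)%nat -> f i <= g i) -> sm f N <= sm g N.
Proof. induction N; intros H; simpl; [lra|]. assert (H1 := H N (Nat.lt_succ_diag_r N)).
 assert (sm f N <= sm g N) by (apply IHN; intros; apply H; lia). lra. Qed.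

Lemma sm_plus f g N : sm (fun i => f i + g i) N = sm f N + sm g N.
Proof. induction N; simpl; [lra|]. rewrite IHN; ring. Qed.

Lemma sm_minus f g N : sm (fun i => f i - g i) N = sm f N - sm g N.
Proof. induction N; simpl; [lra|]. rewrite IHN; ring. Qed.

Lemma sm_scal c f N : sm (fun i => c * f i) N = c * sm f N.
Proof. induction N; simpl; [lra|]. rewrite IHN; ring. Qed.

Lemma sm_tel h N : sm (fun i => h (S i) - h i) N = h N - h O.
Proof. induction N; simpl; [lra|]. rewrite IHN; ring. Qed.

Lemma sm_split f N M : sm f (N + M) = sm f N + sm (fun i => f (N + i)%nat) M.
Proof. induction M; simpl. rewrite Nat.add_0_r; ring.
 rewrite Nat.add_succ_r; simpl; rewrite IHM; ring. Qed.

Lemma abel_left x H N :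
  sm (fun i => x i * (H (x (S i)) - H (x i))) N =
  x N * H (x N) - x O * H (x O) - sm (fun i => (x (S i) - x i) * H (x (S i))) N.
Proof. induction N; simpl; [ring|]. rewrite IHN; ring. Qed.

Lemma abel_right x H N :
  sm (fun i => x (S i) * (H (x (S i)) - H (x i))) N =
  x N * H (x N) - x O * H (x O) - sm (fun i => (x (S i) - x i) * H (x i)) N.
Proof. induction N; simpl; [ring|]. rewrite IHN; ring. Qed.

Lemma part_mono (x : nat -> R) N :
  (forall i, (i < N)%nat -> x i < x (S i)) ->
  forall i j, (i <= j)%nat -> (j <= N)%nat -> x i <= x j.
Proof. intros H i j Hij; induction Hij; intros HN; [lra|].
 assert (x i <= x m) by (apply IHHij; lia). assert (x m < x (S m)) by (apply H; lia). lra. Qed.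

Lemma pow_bounds (p q : R) (k : nat) : 0 <= p <= q ->
  INR (S k) * p ^ k * (q - p) <= q ^ (S k) - p ^ (S k) <= INR (S k) * q ^ k * (q - p).
Proof. intros [H0 H1]. induction k.
 - simpl; lra.
 - destruct IHk as [A B]. rewrite S_INR.
   assert (Hp : 0 <= p ^ k) by (apply pow_le; lra).
   assert (Hq : p ^ k <= q ^ k) by (apply pow_incr; lra).
   change (p ^ S (S k)) with (p * p ^ S k). change (q ^ S (S k)) with (q * q ^ S k).
   change (p ^ S k) with (p * p ^ k) in *. change (q ^ S k) with (q * q ^ k) in *.
   rewrite S_INR in *. assert (0 <= INR k) by apply pos_INR.
   set (P := p ^ k) in *. set (Q := q ^ k) in *.
   assert (E1 : q * (q * Q) - p * (p * P) = q * (q * Q - p * P) + p * P * (q - p)) by ring.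
   assert (E2 : q * (q * Q) - p * (p * P) = p * (q * Q - p * P) + q * Q * (q - p)) by ring.
   assert (0 <= (q - p) * ((INR k + 1) * P * (q - p))) by (apply Rmult_le_pos; [lra| apply Rmult_le_pos; [apply Rmult_le_pos|]; lra]).
   assert (0 <= (q - p) * ((INR k + 1) * Q * (q - p))) by (apply Rmult_le_pos; [lra| apply Rmult_le_pos; [apply Rmult_le_pos|]; lra]).
   assert (q * ((INR k + 1) * P * (q - p)) <= q * (q * Q - p * P)) by (apply Rmult_le_compat_l; lra).
   assert (p * (q * Q - p * P) <= p * ((INR k + 1) * Q * (q - p))) by (apply Rmult_le_compat_l; lra).
   assert (0 <= (q-p) * (Q * (q - p))) by (apply Rmult_le_pos; [lra| apply Rmult_le_pos; lra]).
   split; nra.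
Qed.

Lemma pow_strict (a b : R) (k : nat) : (1 <= k)%nat -> 0 <= a < b -> a ^ k < b ^ k.
Proof. intros Hk [H0 H1]. destruct k; [lia|]. clear Hk. induction k.
 - simpl; lra.
 - change (a ^ S (S k)) with (a * a ^ S k). change (b ^ S (S k)) with (b * b ^ S k).
   assert (0 <= a ^ S k) by (apply pow_le; lra).
   assert (a * a ^ S k <= b * a ^ S k) by (apply Rmult_le_compat_r; lra).
   assert (b * a ^ S k < b * b ^ S k) by (apply Rmult_lt_compat_l; lra). lra.
Qed.

Lemma pow_inj (a b : R) (k : nat) : (1 <= k)%nat -> 0 <= a -> 0 <= b -> a ^ k = b ^ k -> a = b.
Proof. intros Hk Ha Hb E. destruct (Rtotal_order a b) as [H|[H|H]]; auto.
 - assert (a ^ k < b ^ k) by (apply pow_strict; [exact Hk| lra]). lra.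
 - assert (b ^ k < a ^ k) by (apply pow_strict; [exact Hk| lra]). lra.
Qed.
Definition Gp (u v : R) (k : nat) (t : R) := ((t - u) / (v - u)) ^ k.

Lemma Gp_eq u v k t : u < v -> Gp u v k t = (t - u) ^ k / (v - u) ^ k.
Proof. intros H; unfold Gp, Rdiv; rewrite Rpow_mult_distr, pow_inv; auto. Qed.

Lemma Rabs_lt_between a lo hi e : lo <= a <= hi -> hi - lo < e -> lo <= 0 -> 0 <= hi -> Rabs a < e.
Proof. intros. unfold Rabs; destruct (Rcase_abs a); lra. Qed.

Lemma rs_power u v k : u < v -> (1 <= k)%nat ->
  RS_integral (fun t => t) (Gp u v k) u v ((u + INR k * v) / (INR k + 1)).
Proof.
intros Huv Hk eps He. exists (eps/2). split; [lra|].
intros x xi N [HN [Hx0 [HxN Hp]]].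
set (G := Gp u v k).
assert (Hmono: forall i j, (i<=j)%nat -> (j<=N)%nat -> x i <= x j)
  by (apply part_mono; intros; apply Hp; auto).
assert (Hge: forall i, (i<=N)%nat -> u <= x i) by (intros; rewrite <- Hx0; apply Hmono; lia).
assert (Hvu : 0 < / (v - u)) by (apply Rinv_0_lt_compat; lra).
assert (Gmon: forall a b, u <= a <= b -> G a <= G b).
{ intros a b Hab; unfold G, Gp; apply pow_incr; split; unfold Rdiv.
  - apply Rmult_le_pos; lra.
  - apply Rmult_le_compat_r; lra. }
assert (Gu : G u = 0). { unfold G, Gp. unfold Rdiv. rewrite Rminus_diag, Rmult_0_l. apply pow_i; lia. }
assert (Gv : G v = 1). { unfold G, Gp. replace ((v - u) / (v - u)) with 1 by (field; lra). apply pow1. }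
assert (Hk0 : 0 < INR k + 1) by (assert (0 <= INR k) by apply pos_INR; lra).
assert (Hc0 : 0 < (v - u) ^ k) by (apply pow_lt; lra).
set (c := (INR k + 1) * (v - u) ^ k).
assert (Hc : 0 < c) by (unfold c; apply Rmult_lt_0_compat; lra).
set (Phi := fun t => (t - u) ^ (S k) / c).
assert (Hphi : forall i, (i < N)%nat ->
  (x (S i) - x i) * G (x i) <= Phi (x (S i)) - Phi (x i) <= (x (S i) - x i) * G (x (S i))).
{ intros i Hi. assert (H1 := Hge i ltac:(lia)). assert (H2 := Hge (S i) ltac:(lia)).
  assert (H3 := proj1 (Hp i Hi)).
  destruct (pow_bounds (x i - u) (x (S i) - u) k ltac:(lra)) as [B1 B2].
  assert (E1 : (x (S i) - x i) * G (x i) = INR (S k) * (x i - u) ^ k * (x (S i) - u - (x i - u)) / c)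
    by (unfold G; rewrite Gp_eq by lra; unfold c; rewrite S_INR; field; lra).
  assert (E2 : (x (S i) - x i) * G (x (S i)) = INR (S k) * (x (S i) - u) ^ k * (x (S i) - u - (x i - u)) / c)
    by (unfold G; rewrite Gp_eq by lra; unfold c; rewrite S_INR; field; lra).
  assert (E3 : Phi (x (S i)) - Phi (x i) = ((x (S i) - u) ^ S k - (x i - u) ^ S k) / c)
    by (unfold Phi; field; lra).
  rewrite E1, E2, E3. unfold Rdiv.
  assert (0 < / c) by (apply Rinv_0_lt_compat; lra).
  split; apply Rmult_le_compat_r; lra. }
set (L := sm (fun i => (x (S i) - x i) * G (x i)) N).
set (U := sm (fun i => (x (S i) - x i) * G (x (S i))) N).
assert (Hsum : sm (fun i => Phi (x (S i)) - Phi (x i)) N = (v - u) / (INR k + 1)).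
{ rewrite (sm_tel (fun i => Phi (x i))). rewrite HxN, Hx0. unfold Phi, c.
  rewrite Rminus_diag. rewrite pow_i by lia. simpl pow. field. split; lra. }
assert (HL : L <= (v - u) / (INR k + 1)).
{ rewrite <- Hsum. apply sm_le. intros; apply Hphi; auto. }
assert (HU : (v - u) / (INR k + 1) <= U).
{ rewrite <- Hsum. apply sm_le. intros; apply Hphi; auto. }
assert (HUL : U - L <= eps / 2).
{ unfold U, L. rewrite <- sm_minus.
  apply Rle_trans with (sm (fun i => eps / 2 * (G (x (S i)) - G (x i))) N).
  - apply sm_le. intros i Hi. destruct (Hp i Hi) as [A [B C]].
    assert (G (x i) <= G (x (S i))) by (apply Gmon; split; [apply Hge; lia| lra]).
    replace ((x (S i) - x i) * G (x (S i)) - (x (S i) - x i) * G (x i))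
      with ((x (S i) - x i) * (G (x (S i)) - G (x i))) by ring.
    apply Rmult_le_compat_r; lra.
  - rewrite sm_scal, (sm_tel (fun i => G (x i))), HxN, Hx0, Gu, Gv. lra. }
rewrite rs_sum_sm.
assert (A1 : sm (fun i => x i * (G (x (S i)) - G (x i))) N
  <= sm (fun i => xi i * (G (x (S i)) - G (x i))) N
  <= sm (fun i => x (S i) * (G (x (S i)) - G (x i))) N).
{ split; apply sm_le; intros i Hi; destruct (Hp i Hi) as [A [B C]];
  (assert (G (x i) <= G (x (S i))) by (apply Gmon; split; [apply Hge; lia| lra]));
  apply Rmult_le_compat_r; lra. }
rewrite abel_left, abel_right in A1. fold L U in A1. rewrite HxN, Hx0, Gu, Gv in A1.
assert (Em : (u + INR k * v) / (INR k + 1) = v - (v - u) / (INR k + 1)) by (field; lra).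
rewrite Em. set (w := (v - u) / (INR k + 1)) in *.
apply Rabs_lt_between with (lo := w - U) (hi := w - L); lra.
Qed.
Lemma cont_eps f x : continuity_pt f x -> forall e, e > 0 ->
  exists d, d > 0 /\ forall y, Rabs (y - x) < d -> Rabs (f y - f x) < e.
Proof. intros H e He. unfold continuity_pt, continue_in, limit1_in, limit_in in H.
 destruct (H e He) as [d [Hd Hy]]. exists d; split; auto. intros y Hyd.
 destruct (Req_dec y x) as [->|Hne].
 - rewrite Rminus_diag, Rabs_R0; lra.
 - apply (Hy y). split; [split; [exact I| auto]| exact Hyd]. Qed.

Lemma contT (F : R -> R) (k : nat) (c v : R) : continuity F -> F v < 1 ->
  continuity_pt (fun t => (- ln (1 - F t) - c) ^ k) v.
Proof. intros hc Hv.
 assert (H1 : continuity_pt (fun t => 1 - F t) v).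
 { apply (continuity_pt_minus (fct_cte 1) F); [apply continuity_pt_const; intros a b; reflexivity| apply hc]. }
 assert (H2 : continuity_pt (fun t => ln (1 - F t)) v).
 { apply (continuity_pt_comp (fun t => 1 - F t) ln); auto.
   apply derivable_continuous_pt. exists (/ (1 - F v)). apply derivable_pt_lim_ln; lra. }
 assert (H3 : continuity_pt (fun t => - ln (1 - F t) - c) v).
 { apply (continuity_pt_minus (fun t => - ln (1 - F t)) (fct_cte c)).
   - apply (continuity_pt_opp (fun t => ln (1 - F t))); auto.
   - apply continuity_pt_const; intros a b; reflexivity. }
 apply (continuity_pt_comp (fun t => - ln (1 - F t) - c) (fun y => y ^ k)); auto.
 apply derivable_continuous_pt. eexists. apply derivable_pt_lim_pow.
Qed.

Lemma F_nonneg F : is_cdf F -> forall x, 0 <= F x.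
Proof. intros [Hm [_ [H0 _]]] x. destruct (Rle_lt_dec 0 (F x)) as [h|h]; auto.
 destruct (H0 (- F x) ltac:(lra)) as [M HM].
 assert (HA := HM (Rmin x M) (Rmin_r x M)).
 assert (F (Rmin x M) <= F x) by (apply Hm; apply Rmin_l).
 unfold Rabs in HA; destruct (Rcase_abs (F (Rmin x M))); lra. Qed.

Lemma F_le1 F : is_cdf F -> forall x, F x <= 1.
Proof. intros [Hm [_ [_ H1]]] x. destruct (Rle_lt_dec (F x) 1) as [h|h]; auto.
 destruct (H1 (F x - 1) ltac:(lra)) as [M HM].
 assert (HA := HM (Rmax x M) ltac:(apply Rle_ge, Rmax_r)).
 assert (F x <= F (Rmax x M)) by (apply Hm; apply Rmax_l).
 unfold Rabs in HA; destruct (Rcase_abs (F (Rmax x M) - 1)); lra. Qed.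

Lemma F_big F : is_cdf F -> forall y, y < 1 -> exists x, y < F x.
Proof. intros [_ [_ [_ H1]]] y Hy. destruct (H1 (1 - y) ltac:(lra)) as [M HM].
 exists M. assert (HA := HM M ltac:(lra)). unfold Rabs in HA; destruct (Rcase_abs (F M - 1)); lra. Qed.

Lemma F_small F : is_cdf F -> forall y, 0 < y -> exists x, F x < y.
Proof. intros [_ [_ [H0 _]]] y Hy. destruct (H0 y ltac:(lra)) as [M HM].
 exists M. assert (HA := HM M ltac:(lra)). unfold Rabs in HA; destruct (Rcase_abs (F M)); lra. Qed.

Lemma ivt_val F : is_cdf F -> continuity F -> forall a b y, F a < y < F b ->
  exists z, a < z < b /\ F z = y.
Proof. intros hF hc a b y Hy.
 assert (Hab : a < b). { destruct (Rlt_le_dec a b) as [h|h]; auto.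
   assert (F b <= F a) by (apply (proj1 hF); auto). lra. }
 assert (Hc : continuity (fun t => F t - y)).
 { apply (continuity_minus F (fct_cte y)); auto. apply continuity_const; intros p q; reflexivity. }
 destruct (IVT (fun t => F t - y) a b Hc Hab ltac:(lra) ltac:(lra)) as [z [Hz Ez]].
 exists z. assert (z <> a) by (intros ->; lra). assert (z <> b) by (intros ->; lra).
 split; [lra| lra]. Qed.

Lemma ln_le' a b : 0 < a -> a <= b -> ln a <= ln b.
Proof. intros Ha Hab. destruct Hab as [h| ->]; [left; apply ln_increasing; auto| lra]. Qed.

Lemma Rhaz_mono F : is_cdf F -> forall a b, a <= b -> F b < 1 -> Rhaz F a <= Rhaz F b.
Proof. intros hF a b Hab Hb. unfold Rhaz. assert (F a <= F b) by (apply (proj1 hF); auto).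
 assert (ln (1 - F b) <= ln (1 - F a)) by (apply ln_le'; lra). lra. Qed.

Lemma Rhaz_smono F : is_cdf F -> forall a b, F a < F b -> F b < 1 -> Rhaz F a < Rhaz F b.
Proof. intros hF a b Hab Hb. unfold Rhaz.
 assert (ln (1 - F b) < ln (1 - F a)) by (apply ln_increasing; lra). lra. Qed.

Lemma Rhaz_pos F : is_cdf F -> forall a, 0 < F a < 1 -> 0 < Rhaz F a.
Proof. intros hF a Ha. unfold Rhaz. assert (ln (1 - F a) < ln 1) by (apply ln_increasing; lra).
 rewrite ln_1 in H. lra. Qed.

Lemma F_of_Rhaz F a : F a < 1 -> F a = 1 - exp (- Rhaz F a).
Proof. intros H. unfold Rhaz. rewrite Ropp_involutive, exp_ln by lra. ring. Qed.

Lemma lF_lt_of F u : continuity F -> 0 < F u -> lF_lt F u.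
Proof. intros hc Hu. destruct (cont_eps F u (hc u) (F u) Hu) as [d [Hd Hy]].
 exists (u - d / 2). split; [lra|]. assert (HA := Hy (u - d/2) ltac:(rewrite Rabs_left; lra)).
 unfold Rabs in HA; destruct (Rcase_abs (F (u - d / 2) - F u)); lra. Qed.

Lemma lt_rF_of F v : continuity F -> F v < 1 -> lt_rF F v.
Proof. intros hc Hv. destruct (cont_eps F v (hc v) (1 - F v) ltac:(lra)) as [d [Hd Hy]].
 exists (v + d / 2). split; [lra|]. assert (HA := Hy (v + d/2) ltac:(rewrite Rabs_right; lra)).
 unfold Rabs in HA; destruct (Rcase_abs (F (v + d / 2) - F v)); lra. Qed.
Definition HYP F k := forall u v, lF_lt F u -> u < v -> lt_rF F v -> F u < F v ->
     cond_exp_is F k u v ((u + INR k * v) / (INR k + 1)).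
Definition Tx F k u t := (Rhaz F t - Rhaz F u) ^ k.
Definition Qx F k u v := (v - u) * Tx F k u v / (INR k + 1).
Definition Ls F k u (x : nat -> R) N := sm (fun i => (x (S i) - x i) * Tx F k u (x i)) N.
Definition Us F k u (x : nat -> R) N := sm (fun i => (x (S i) - x i) * Tx F k u (x (S i))) N.
Definition ispart a b (x : nat -> R) N d := (0 < N)%nat /\ x O = a /\ x N = b /\
   forall i, (i < N)%nat -> x i < x (S i) /\ x (S i) - x i < d.

Lemma sm_zero f N : (forall i, (i < N)%nat -> f i = 0) -> sm f N = 0.
Proof. intros H. rewrite (sm_ext f (fun i => 0 * 0) N) by (intros; rewrite H; auto; ring).
 rewrite sm_scal; ring. Qed.

Lemma Rhaz_monoF F a b : F a <= F b -> F b < 1 -> Rhaz F a <= Rhaz F b.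
Proof. intros Hab Hb. unfold Rhaz.
 assert (ln (1 - F b) <= ln (1 - F a)) by (apply ln_le'; lra). lra. Qed.

Lemma T_mono F k u a b : is_cdf F -> u <= a <= b -> F b < 1 -> 0 <= Tx F k u a <= Tx F k u b.
Proof. intros hF Hab Hb. unfold Tx.
 assert (Rhaz F u <= Rhaz F a) by (apply Rhaz_mono; auto; [lra| assert (F a <= F b) by (apply (proj1 hF); lra); lra]).
 assert (Rhaz F a <= Rhaz F b) by (apply Rhaz_mono; auto; lra).
 split; [apply pow_le; lra| apply pow_incr; lra]. Qed.

Lemma scale_lemma v u k Tv X m e : Tv > 0 -> INR k + 1 > 0 -> m = (u + INR k * v) / (INR k + 1) ->
  Rabs (v - X / Tv - m) < e / Tv -> Rabs (X - (v - u) * Tv / (INR k + 1)) < e.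
Proof. intros HT Hk Hm H. subst m.
 replace (X - (v - u) * Tv / (INR k + 1)) with (Tv * - (v - X / Tv - (u + INR k * v) / (INR k + 1)))
   by (field; lra).
 rewrite Rabs_mult, Rabs_Ropp, (Rabs_pos_eq Tv) by lra.
 apply Rmult_lt_compat_l with (r := Tv) in H; [|lra].
 replace (Tv * (e / Tv)) with e in H by (field; lra). exact H. Qed.

Lemma conv F k (hF : is_cdf F) (hc : continuity F) (hk : (1 <= k)%nat) (H : HYP F k)
  u (hu0 : 0 < F u) (hu1 : F u < 1) v (huv : u < v) (hv : F v < 1) :
  forall e, e > 0 -> exists d, d > 0 /\ forall x N, ispart u v x N d ->
    Rabs (Ls F k u x N - Qx F k u v) < e /\ Rabs (Us F k u x N - Qx F k u v) < e.
Proof.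
intros e He.
assert (Hk0 : INR k + 1 > 0) by (assert (0 <= INR k) by apply pos_INR; lra).
assert (HSv : Rhaz F u <= Rhaz F v) by (apply Rhaz_mono; auto; lra).
destruct (Req_dec (Rhaz F v - Rhaz F u) 0) as [E|NE].
- exists 1. split; [lra|]. intros x N [HN [H0 [HNe Hp]]].
  assert (Hmono: forall i j, (i<=j)%nat -> (j<=N)%nat -> x i <= x j)
    by (apply part_mono; intros; apply Hp; auto).
  assert (HT0 : forall i, (i <= N)%nat -> Tx F k u (x i) = 0).
  { intros i Hi. assert (u <= x i) by (rewrite <- H0; apply Hmono; lia).
    assert (x i <= v) by (rewrite <- HNe; apply Hmono; lia).
    destruct (T_mono F k u (x i) v hF ltac:(lra) hv) as [A B].
    unfold Tx in B at 2. rewrite E, pow_i in B by lia. lra. }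
  assert (HQ : Qx F k u v = 0).
  { unfold Qx, Tx. rewrite E, pow_i by lia. unfold Rdiv; ring. }
  unfold Ls, Us. rewrite HQ, !sm_zero.
  + rewrite Rminus_diag, Rabs_R0; lra.
  + intros i Hi; rewrite HT0 by lia; ring.
  + intros i Hi; rewrite HT0 by lia; ring.
- assert (HSp : 0 < Rhaz F v - Rhaz F u) by lra.
  set (Tv := (Rhaz F v - Rhaz F u) ^ k).
  assert (HTv : Tv > 0) by (apply pow_lt; lra).
  assert (Fuv : F u < F v).
  { destruct (Rlt_le_dec (F u) (F v)) as [h|h]; auto.
    assert (Rhaz F v <= Rhaz F u) by (apply Rhaz_monoF; auto). lra. }
  assert (HR := H u v (lF_lt_of F u hc hu0) huv (lt_rF_of F v hc hv) Fuv).
  unfold cond_exp_is, RS_integral in HR.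
  destruct (HR (e / Tv) ltac:(apply Rdiv_lt_0_compat; lra)) as [d [Hd Hd']].
  exists d. split; auto. intros x N [HN [H0 [HNe Hp]]].
  assert (HG : forall t, cond_cdf F k u v t = Tx F k u t / Tv).
  { intros t. unfold cond_cdf, Tx, Tv, Rdiv. rewrite Rpow_mult_distr, pow_inv. auto. }
  assert (Gu : cond_cdf F k u v u = 0).
  { rewrite HG. unfold Tx. rewrite Rminus_diag, pow_i by lia. unfold Rdiv; ring. }
  assert (Gv : cond_cdf F k u v v = 1).
  { rewrite HG. unfold Tx. fold Tv. field. lra. }
  split.
  + assert (Ht : tagged_partition u v x (fun i => x (S i)) N d).
    { split; [auto|split;[auto|split;[auto|]]]; intros i Hi; destruct (Hp i Hi); repeat split; lra. }
    assert (A := Hd' x (fun i => x (S i)) N Ht).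
    rewrite rs_sum_sm, abel_right, HNe, H0, Gu, Gv in A.
    rewrite (sm_ext _ (fun i => / Tv * ((x (S i) - x i) * Tx F k u (x i)))) in A
      by (intros; rewrite HG; unfold Rdiv; ring).
    rewrite sm_scal in A. fold (Ls F k u x N) in A.
    unfold Qx. fold Tv. apply (scale_lemma v u k Tv _ ((u + INR k * v) / (INR k + 1))); auto.
    replace (v - Ls F k u x N / Tv - (u + INR k * v) / (INR k + 1)) with
      (v * 1 - u * 0 - / Tv * Ls F k u x N - (u + INR k * v) / (INR k + 1)) by (unfold Rdiv; ring).
    exact A.
  + assert (Ht : tagged_partition u v x x N d).
    { split; [auto|split;[auto|split;[auto|]]]; intros i Hi; destruct (Hp i Hi); repeat split; lra. }
    assert (A := Hd' x x N Ht).
    rewrite rs_sum_sm, abel_left, HNe, H0, Gu, Gv in A.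
    rewrite (sm_ext _ (fun i => / Tv * ((x (S i) - x i) * Tx F k u (x (S i))))) in A
      by (intros; rewrite HG; unfold Rdiv; ring).
    rewrite sm_scal in A. fold (Us F k u x N) in A.
    unfold Qx. fold Tv. apply (scale_lemma v u k Tv _ ((u + INR k * v) / (INR k + 1))); auto.
    replace (v - Us F k u x N / Tv - (u + INR k * v) / (INR k + 1)) with
      (v * 1 - u * 0 - / Tv * Us F k u x N - (u + INR k * v) / (INR k + 1)) by (unfold Rdiv; ring).
    exact A.
Qed.
Definition unif a b N i := a + INR i * ((b - a) / INR N).
Definition catp u v w N i := if (i <=? N)%nat then unif u v N i else unif v w N (i - N).

Lemma unif_0 a b N : unif a b N 0 = a.
Proof. unfold unif; simpl; ring. Qed.
Lemma unif_N a b N : (0 < N)%nat -> unif a b N N = b.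
Proof. intros H. unfold unif. assert (0 < INR N) by (apply lt_0_INR; auto). field; lra. Qed.
Lemma unif_step a b N i : unif a b N (S i) - unif a b N i = (b - a) / INR N.
Proof. unfold unif; rewrite S_INR; ring. Qed.
Lemma unif_range a b N i : a <= b -> (0 < N)%nat -> (i <= N)%nat -> a <= unif a b N i <= b.
Proof. intros Hab HN Hi. unfold unif. assert (0 < INR N) by (apply lt_0_INR; auto).
 assert (0 <= (b - a) / INR N) by (apply Rmult_le_pos; [lra| left; apply Rinv_0_lt_compat; lra]).
 assert (INR i <= INR N) by (apply le_INR; auto). assert (0 <= INR i) by apply pos_INR.
 assert (INR N * ((b - a) / INR N) = b - a) by (field; lra).
 split; nra. Qed.

Lemma catp_lo u v w N i : (i <= N)%nat -> catp u v w N i = unif u v N i.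
Proof. intros H. unfold catp. apply Nat.leb_le in H. rewrite H; auto. Qed.
Lemma catp_hi u v w N i : (0 < N)%nat -> catp u v w N (N + i) = unif v w N i.
Proof. intros H. unfold catp. destruct i.
 - rewrite Nat.add_0_r, Nat.leb_refl, unif_N, unif_0; auto.
 - assert (E : (N + S i <=? N)%nat = false) by (apply Nat.leb_gt; lia). rewrite E.
   f_equal; lia. Qed.

Lemma div_lt a d n : 0 < n -> a < d * n -> a / n < d.
Proof. intros Hn H. apply (Rmult_lt_reg_r n); auto. unfold Rdiv.
 rewrite Rmult_assoc, Rinv_l, Rmult_1_r; lra. Qed.

Lemma ispart_unif a b N d : a < b -> (0 < N)%nat -> (b - a) / INR N < d -> ispart a b (unif a b N) N d.
Proof. intros Hab HN Hd. assert (0 < INR N) by (apply lt_0_INR; auto).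
 assert (0 < (b - a) / INR N) by (apply Rdiv_lt_0_compat; lra).
 split; [auto| split; [apply unif_0| split; [apply unif_N; auto|]]].
 intros i Hi. pose proof (unif_step a b N i). split; lra. Qed.

Lemma ispart_cat u v w N d : u < v -> v < w -> (0 < N)%nat -> (v - u) / INR N < d -> (w - v) / INR N < d ->
  ispart u w (catp u v w N) (N + N) d.
Proof. intros H1 H2 HN Hd1 Hd2. assert (0 < INR N) by (apply lt_0_INR; auto).
 assert (0 < (v - u) / INR N) by (apply Rdiv_lt_0_compat; lra).
 assert (0 < (w - v) / INR N) by (apply Rdiv_lt_0_compat; lra).
 split; [lia| split; [rewrite catp_lo by lia; apply unif_0| split; [rewrite catp_hi, unif_N; auto|]]].
 intros i Hi. destruct (Nat.lt_ge_cases i N) as [h|h].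
 - rewrite !catp_lo by lia. pose proof (unif_step u v N i). split; lra.
 - replace i with (N + (i - N))%nat by lia. replace (S (N + (i - N))) with (N + S (i - N))%nat by lia.
   rewrite !catp_hi by auto. pose proof (unif_step v w N (i - N)). split; lra. Qed.

Lemma ispart_weak a b x N d d' : d <= d' -> ispart a b x N d -> ispart a b x N d'.
Proof. intros H [A [B [C D]]]. split; auto; split; auto; split; auto. intros i Hi; destruct (D i Hi); split; lra. Qed.

Lemma le_eps a b : (forall e, e > 0 -> a <= b + e) -> a <= b.
Proof. intros H. destruct (Rle_lt_dec a b) as [h|h]; auto.
 assert (A := H ((a - b) / 2) ltac:(lra)). lra. Qed.

Lemma Q_ineq F k (hF : is_cdf F) (hc : continuity F) (hk : (1 <= k)%nat) (H : HYP F k)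
  u (hu0 : 0 < F u) (hu1 : F u < 1) v w (huv : u < v) (hvw : v < w) (hw : F w < 1) :
  (w - v) * Tx F k u v <= Qx F k u w - Qx F k u v <= (w - v) * Tx F k u w.
Proof.
assert (hv : F v < 1) by (assert (F v <= F w) by (apply (proj1 hF); lra); lra).
assert (key : forall e, e > 0 -> exists N, (0 < N)%nat /\
   Rabs (Ls F k u (catp u v w N) (N + N) - Qx F k u w) < e /\
   Rabs (Us F k u (catp u v w N) (N + N) - Qx F k u w) < e /\
   Rabs (Ls F k u (unif u v N) N - Qx F k u v) < e /\
   Rabs (Us F k u (unif u v N) N - Qx F k u v) < e).
{ intros e He.
  destruct (conv F k hF hc hk H u hu0 hu1 w ltac:(lra) hw e He) as [d1 [Hd1 C1]].
  destruct (conv F k hF hc hk H u hu0 hu1 v huv hv e He) as [d2 [Hd2 C2]].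
  set (d := Rmin d1 d2).
  assert (Hd : d > 0) by (unfold d; apply Rmin_pos; auto).
  destruct (INR_archimed d (w - u) Hd) as [N HN].
  assert (HN0 : (0 < N)%nat).
  { destruct N; [simpl in HN; lra| lia]. }
  assert (0 < INR N) by (apply lt_0_INR; auto).
  assert (A1 : (v - u) / INR N < d) by (apply div_lt; lra).
  assert (A2 : (w - v) / INR N < d) by (apply div_lt; lra).
  exists N. split; auto.
  destruct (C1 (catp u v w N) (N + N)%nat) as [B1 B2].
  { apply ispart_weak with d; [apply Rmin_l|]. apply ispart_cat; auto. }
  destruct (C2 (unif u v N) N) as [B3 B4].
  { apply ispart_weak with d; [apply Rmin_r|]. apply ispart_unif; auto. }
  auto. }
assert (split_L : forall N, (0 < N)%nat -> Ls F k u (catp u v w N) (N + N) =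
   Ls F k u (unif u v N) N + sm (fun j => (unif v w N (S j) - unif v w N j) * Tx F k u (unif v w N j)) N).
{ intros N HN. unfold Ls. rewrite sm_split. f_equal.
  - apply sm_ext. intros i Hi. rewrite !catp_lo by lia. auto.
  - apply sm_ext. intros i Hi. replace (S (N + i)) with (N + S i)%nat by lia.
    rewrite !catp_hi by auto. auto. }
assert (split_U : forall N, (0 < N)%nat -> Us F k u (catp u v w N) (N + N) =
   Us F k u (unif u v N) N + sm (fun j => (unif v w N (S j) - unif v w N j) * Tx F k u (unif v w N (S j))) N).
{ intros N HN. unfold Us. rewrite sm_split. f_equal.
  - apply sm_ext. intros i Hi. rewrite !catp_lo by lia. auto.
  - apply sm_ext. intros i Hi. replace (S (N + i)) with (N + S i)%nat by lia.
    rewrite !catp_hi by auto. auto. }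
split; apply le_eps; intros e He; destruct (key (e / 2) ltac:(lra)) as [N [HN [B1 [B2 [B3 B4]]]]].
- assert (L2 : (w - v) * Tx F k u v <= sm (fun j => (unif v w N (S j) - unif v w N j) * Tx F k u (unif v w N j)) N).
  { apply Rle_trans with (sm (fun j => Tx F k u v * (unif v w N (S j) - unif v w N j)) N).
    - rewrite sm_scal, (sm_tel (unif v w N)), unif_N, unif_0 by auto. lra.
    - apply sm_le. intros j Hj. rewrite unif_step.
      assert (0 < INR N) by (apply lt_0_INR; auto).
      assert (0 < (w - v) / INR N) by (apply Rdiv_lt_0_compat; lra).
      destruct (unif_range v w N j ltac:(lra) HN ltac:(lia)).
      destruct (T_mono F k u v (unif v w N j) hF ltac:(lra) ltac:(assert (F (unif v w N j) <= F w) by (apply (proj1 hF); lra); lra)).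
      nra. }
  rewrite split_L in B1 by auto.
  unfold Rabs in B1, B3; destruct (Rcase_abs (Ls F k u (unif u v N) N + sm (fun j => (unif v w N (S j) - unif v w N j) * Tx F k u (unif v w N j)) N - Qx F k u w));
  destruct (Rcase_abs (Ls F k u (unif u v N) N - Qx F k u v)); lra.
- assert (U2 : sm (fun j => (unif v w N (S j) - unif v w N j) * Tx F k u (unif v w N (S j))) N <= (w - v) * Tx F k u w).
  { apply Rle_trans with (sm (fun j => Tx F k u w * (unif v w N (S j) - unif v w N j)) N).
    - apply sm_le. intros j Hj. rewrite unif_step.
      assert (0 < INR N) by (apply lt_0_INR; auto).
      assert (0 < (w - v) / INR N) by (apply Rdiv_lt_0_compat; lra).
      destruct (unif_range v w N (S j) ltac:(lra) HN ltac:(lia)).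
      destruct (T_mono F k u (unif v w N (S j)) w hF ltac:(lra) hw).
      nra.
    - rewrite sm_scal, (sm_tel (unif v w N)), unif_N, unif_0 by auto. lra. }
  rewrite split_U in B2 by auto.
  unfold Rabs in B2, B4; destruct (Rcase_abs (Us F k u (unif u v N) N + sm (fun j => (unif v w N (S j) - unif v w N j) * Tx F k u (unif v w N (S j))) N - Qx F k u w));
  destruct (Rcase_abs (Us F k u (unif u v N) N - Qx F k u v)); lra.
Qed.
Lemma Q_deriv F k (hF : is_cdf F) (hc : continuity F) (hk : (1 <= k)%nat) (H : HYP F k)
  u (hu0 : 0 < F u) (hu1 : F u < 1) v (huv : u < v) (hv : F v < 1) :
  derivable_pt_lim (Qx F k u) v (Tx F k u v).
Proof.
intros e He.
assert (HcT : continuity_pt (Tx F k u) v) by (apply (contT F k (Rhaz F u) v hc hv)).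
destruct (cont_eps _ _ HcT (e / 2) ltac:(lra)) as [dT [HdT CT]].
destruct (cont_eps _ _ (hc v) (1 - F v) ltac:(lra)) as [dF [HdF CF]].
assert (Hd : 0 < Rmin dT (Rmin dF (v - u))) by (repeat apply Rmin_pos; lra).
exists (mkposreal _ Hd). intros h Hh0 Hh. simpl in Hh.
assert (h1 : Rabs h < dT) by (apply Rlt_le_trans with (1 := Hh); apply Rmin_l).
assert (h2 : Rabs h < dF) by (apply Rlt_le_trans with (1 := Hh); eapply Rle_trans; [apply Rmin_r| apply Rmin_l]).
assert (h3 : Rabs h < v - u) by (apply Rlt_le_trans with (1 := Hh); eapply Rle_trans; [apply Rmin_r| apply Rmin_r]).
replace (v + h - v) with h in CT, CF by ring.
assert (AT := CT (v + h) ltac:(replace (v + h - v) with h by ring; auto)).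
assert (AF := CF (v + h) ltac:(replace (v + h - v) with h by ring; auto)).
assert (Fvh : F (v + h) < 1) by (unfold Rabs in AF; destruct (Rcase_abs (F (v + h) - F v)); lra).
assert (Hq : h * ((Qx F k u (v + h) - Qx F k u v) / h) = Qx F k u (v + h) - Qx F k u v) by (field; auto).
set (q := (Qx F k u (v + h) - Qx F k u v) / h) in *.
unfold Rabs in h3, AT; destruct (Rcase_abs h) as [hn|hp]; destruct (Rcase_abs (Tx F k u (v + h) - Tx F k u v)).
- destruct (Q_ineq F k hF hc hk H u hu0 hu1 (v + h) v ltac:(lra) ltac:(lra) hv) as [B1 B2].
  assert (Tx F k u (v + h) <= q <= Tx F k u v) by (split; nra).
  unfold Rabs; destruct (Rcase_abs (q - Tx F k u v)); lra.
- destruct (Q_ineq F k hF hc hk H u hu0 hu1 (v + h) v ltac:(lra) ltac:(lra) hv) as [B1 B2].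
  assert (Tx F k u (v + h) <= q <= Tx F k u v) by (split; nra).
  unfold Rabs; destruct (Rcase_abs (q - Tx F k u v)); lra.
- assert (h <> 0) by auto. assert (0 < h) by lra.
  destruct (Q_ineq F k hF hc hk H u hu0 hu1 v (v + h) huv ltac:(lra) Fvh) as [B1 B2].
  assert (Tx F k u v <= q <= Tx F k u (v + h)) by (split; nra).
  unfold Rabs; destruct (Rcase_abs (q - Tx F k u v)); lra.
- assert (0 < h) by lra.
  destruct (Q_ineq F k hF hc hk H u hu0 hu1 v (v + h) huv ltac:(lra) Fvh) as [B1 B2].
  assert (Tx F k u v <= q <= Tx F k u (v + h)) by (split; nra).
  unfold Rabs; destruct (Rcase_abs (q - Tx F k u v)); lra.
Qed.
Lemma g_deriv F k (hF : is_cdf F) (hc : continuity F) (hk : (1 <= k)%nat) (H : HYP F k)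
  u (hu0 : 0 < F u) (hu1 : F u < 1) v (huv : u < v) (hv : F v < 1) :
  derivable_pt_lim (fun t => Qx F k u t / (t - u) ^ (S k)) v 0.
Proof.
assert (H1 : derivable_pt_lim (fun t => t - u) v 1).
{ assert (A := derivable_pt_lim_minus id (fct_cte u) v 1 0 (derivable_pt_lim_id v) (derivable_pt_lim_const u v)).
  replace 1 with (1 - 0) by ring. exact A. }
assert (H2 : derivable_pt_lim (fun t => (t - u) ^ (S k)) v (INR (S k) * (v - u) ^ (Init.Nat.pred (S k)) * 1)).
{ exact (derivable_pt_lim_comp (fun t => t - u) (fun y => y ^ (S k)) v 1 _ H1 (derivable_pt_lim_pow (v - u) (S k))). }
assert (Hne : (v - u) ^ S k <> 0) by (apply pow_nonzero; lra).
assert (A := derivable_pt_lim_div (Qx F k u) (fun t => (t - u) ^ (S k)) v _ _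
   (Q_deriv F k hF hc hk H u hu0 hu1 v huv hv) H2 Hne).
assert (E : Tx F k u v * (v - u) ^ S k - INR (S k) * (v - u) ^ Init.Nat.pred (S k) * 1 * Qx F k u v = 0).
{ unfold Qx. rewrite S_INR. simpl Init.Nat.pred. rewrite <- tech_pow_Rmult. field.
  assert (0 <= INR k) by apply pos_INR. lra. }
cbv beta in A. rewrite E in A. unfold Rdiv at 1 in A. rewrite Rmult_0_l in A. exact A.
Qed.

Lemma g_const F k (hF : is_cdf F) (hc : continuity F) (hk : (1 <= k)%nat) (H : HYP F k)
  u (hu0 : 0 < F u) (hu1 : F u < 1) v1 v2 (h1 : u < v1) (h12 : v1 < v2) (hv : F v2 < 1) :
  Qx F k u v1 / (v1 - u) ^ (S k) = Qx F k u v2 / (v2 - u) ^ (S k).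
Proof.
destruct (MVT_cor2 (fun t => Qx F k u t / (t - u) ^ (S k)) (fun _ => 0) v1 v2 h12) as [c [Hc _]].
- intros c Hc. apply g_deriv; auto; [lra|]. assert (F c <= F v2) by (apply (proj1 hF); lra). lra.
- lra.
Qed.

Lemma div_cross a b c d : b <> 0 -> d <> 0 -> a / b = c / d -> a * d = c * b.
Proof. intros Hb Hd E. replace (a * d) with (a / b * b * d) by (field; auto). rewrite E. field; auto. Qed.

Lemma cross F k (hF : is_cdf F) (hc : continuity F) (hk : (1 <= k)%nat) (H : HYP F k)
  u (hu0 : 0 < F u) (hu1 : F u < 1) v1 v2 (h1 : u < v1) (h2 : u < v2) (hv1 : F v1 < 1) (hv2 : F v2 < 1) :
  (Rhaz F v1 - Rhaz F u) * (v2 - u) = (Rhaz F v2 - Rhaz F u) * (v1 - u).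
Proof.
assert (gen : forall a b, u < a -> a < b -> F b < 1 ->
   (Rhaz F a - Rhaz F u) * (b - u) = (Rhaz F b - Rhaz F u) * (a - u)).
{ intros a b ha hab hb. assert (E := g_const F k hF hc hk H u hu0 hu1 a b ha hab hb).
  assert (Hk0 : INR k + 1 <> 0) by (assert (0 <= INR k) by apply pos_INR; lra).
  assert (Ha : (a - u) ^ k <> 0) by (apply pow_nonzero; lra).
  assert (Hb : (b - u) ^ k <> 0) by (apply pow_nonzero; lra).
  unfold Qx in E. rewrite <- !tech_pow_Rmult in E.
  assert (E2 : Tx F k u a * (b - u) ^ k = Tx F k u b * (a - u) ^ k).
  { rewrite (Rmult_comm (Tx F k u a)), (Rmult_comm (Tx F k u b)).
    replace ((a - u) * Tx F k u a / (INR k + 1) / ((a - u) * (a - u) ^ k))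
      with (Tx F k u a / ((INR k + 1) * (a - u) ^ k)) in E by (field; split; [|split]; auto; lra).
    replace ((b - u) * Tx F k u b / (INR k + 1) / ((b - u) * (b - u) ^ k))
      with (Tx F k u b / ((INR k + 1) * (b - u) ^ k)) in E by (field; split; [|split]; auto; lra).
    apply (div_cross _ _ _ _ (Rmult_integral_contrapositive_currified _ _ Hk0 Ha)
             (Rmult_integral_contrapositive_currified _ _ Hk0 Hb)) in E.
    apply (Rmult_eq_reg_l (INR k + 1)); auto. rewrite (Rmult_comm (Tx F k u a)) in E.
    lra. }
  unfold Tx in E2. rewrite <- !Rpow_mult_distr in E2.
  assert (HA : Rhaz F u <= Rhaz F a) by (apply Rhaz_mono; auto; [lra| assert (F a <= F b) by (apply (proj1 hF); lra); lra]).
  assert (HB : Rhaz F u <= Rhaz F b) by (apply Rhaz_mono; auto; lra).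
  apply (pow_inj _ _ k hk); auto; apply Rmult_le_pos; lra. }
destruct (Rtotal_order v1 v2) as [h|[h|h]].
- apply gen; auto.
- subst; ring.
- symmetry; apply gen; auto.
Qed.
Lemma lin_u F k (hF : is_cdf F) (hc : continuity F) (hk : (1 <= k)%nat) (H : HYP F k)
  u (hu0 : 0 < F u) (hu1 : F u < 1) :
  exists c, c > 0 /\ forall v, u < v -> F v < 1 -> Rhaz F v - Rhaz F u = c * (v - u).
Proof.
destruct (F_big F hF ((1 + F u) / 2) ltac:(lra)) as [x0 Hx0].
destruct (ivt_val F hF hc u x0 ((1 + F u) / 2) ltac:(lra)) as [v1 [[Hv1 _] Fv1]].
assert (HS : Rhaz F u < Rhaz F v1) by (apply Rhaz_smono; auto; lra).
exists ((Rhaz F v1 - Rhaz F u) / (v1 - u)). split.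
- apply Rdiv_lt_0_compat; lra.
- intros v Hv Fv. assert (E := cross F k hF hc hk H u hu0 hu1 v1 v Hv1 Hv ltac:(lra) Fv).
  apply (Rmult_eq_reg_r (v1 - u)); [|lra].
  rewrite <- E. field. lra.
Qed.

Lemma forward F k (hF : is_cdf F) (hc : continuity F) (hk : (1 <= k)%nat) (H : HYP F k) :
  exists l, is_lF F l /\ rF_infinite F /\
     exists c, c > 0 /\ forall x, l <= x -> F x = 1 - exp (- (c * (x - l))).
Proof.
assert (Fnn := F_nonneg F hF).
assert (Fmon := proj1 hF).
destruct (F_small F hF (1/2) ltac:(lra)) as [a Ha].
destruct (F_big F hF (1/2) ltac:(lra)) as [b Hb].
destruct (ivt_val F hF hc a b (1/2) ltac:(lra)) as [u0 [_ Fu0]].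
destruct (lin_u F k hF hc hk H u0 ltac:(lra) ltac:(lra)) as [c [Hc Lc]].
set (R0 := Rhaz F u0).
assert (HR0 : 0 < R0) by (apply Rhaz_pos; auto; lra).
destruct (F_big F hF (3/4) ltac:(lra)) as [b' Hb'].
destruct (ivt_val F hF hc u0 b' (3/4) ltac:(lra)) as [z0 [[Hz0 _] Fz0]].
assert (lin_all : forall x, 0 < F x < 1 -> Rhaz F x = R0 + c * (x - u0)).
{ intros x Hx. destruct (Rtotal_order x u0) as [h|[h|h]].
  - destruct (lin_u F k hF hc hk H x ltac:(lra) ltac:(lra)) as [cx [Hcx Lx]].
    assert (E1 := Lx u0 h ltac:(lra)). assert (E2 := Lx z0 ltac:(lra) ltac:(lra)).
    assert (E3 := Lc z0 Hz0 ltac:(lra)). fold R0 in E1, E3.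
    assert (Ecx : cx = c).
    { apply (Rmult_eq_reg_r (z0 - u0)); [|lra]. lra. }
    subst cx. lra.
  - subst; unfold R0; ring.
  - assert (E := Lc x h ltac:(lra)). fold R0 in E. lra. }
set (l := u0 - R0 / c).
assert (El : forall x, R0 + c * (x - u0) = c * (x - l)) by (intros; unfold l; field; lra).
assert (Fexp : forall x, 0 < F x < 1 -> F x = 1 - exp (- (c * (x - l)))).
{ intros x Hx. rewrite <- El, <- lin_all by auto. apply F_of_Rhaz; lra. }
assert (Flt1 : forall x, F x < 1).
{ intros x. destruct (Rlt_le_dec (F x) 1) as [h|h]; auto. exfalso.
  assert (Hx : u0 < x). { destruct (Rlt_le_dec u0 x) as [h'|h']; auto. assert (F x <= F u0) by (apply Fmon; auto). lra. }
  set (bb := 1 - exp (- (c * (x - l)))).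
  assert (Hbb : bb < 1) by (unfold bb; assert (0 < exp (- (c * (x - l)))) by apply exp_pos; lra).
  set (t := (Rmax bb (1/2) + 1) / 2).
  assert (Ht1 : bb < t /\ 1/2 < t /\ t < 1).
  { unfold t. assert (bb <= Rmax bb (1/2)) by apply Rmax_l. assert (1/2 <= Rmax bb (1/2)) by apply Rmax_r.
    assert (Rmax bb (1/2) < 1) by (apply Rmax_lub_lt; lra). lra. }
  destruct (ivt_val F hF hc u0 x t ltac:(lra)) as [z [[Hz1 Hz2] Fz]].
  assert (E := Fexp z ltac:(lra)).
  assert (exp (- (c * (x - l))) <= exp (- (c * (z - l)))).
  { destruct (Rle_lt_or_eq_dec _ _ (Rlt_le _ _ Hz2)) as [hh|hh].
    - left; apply exp_increasing. nra.
    - subst; lra. }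
  unfold bb in Ht1. lra. }
assert (Fle0 : forall x, x <= l -> F x <= 0).
{ intros x Hx. destruct (Rle_lt_dec (F x) 0) as [h|h]; auto. exfalso.
  assert (E := lin_all x ltac:(split; auto)). rewrite El in E.
  assert (0 < Rhaz F x) by (apply Rhaz_pos; auto). nra. }
assert (Fgt0 : forall x, l < x -> 0 < F x).
{ intros x Hx. destruct (Rlt_le_dec 0 (F x)) as [h|h]; auto. exfalso.
  assert (Hxu : x < u0). { destruct (Rlt_le_dec x u0) as [h'|h']; auto. assert (F u0 <= F x) by (apply Fmon; auto). lra. }
  set (bb := 1 - exp (- (c * (x - l)))).
  assert (Hbb : 0 < bb).
  { unfold bb. assert (exp (- (c * (x - l))) < exp 0) by (apply exp_increasing; nra). rewrite exp_0 in H0. lra. }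
  set (t := Rmin bb (1/2) / 2).
  assert (Ht1 : 0 < t /\ t < bb /\ t < 1/2).
  { unfold t. assert (Rmin bb (1/2) <= bb) by apply Rmin_l. assert (Rmin bb (1/2) <= 1/2) by apply Rmin_r.
    assert (0 < Rmin bb (1/2)) by (apply Rmin_pos; lra). lra. }
  destruct (ivt_val F hF hc x u0 t ltac:(lra)) as [z [[Hz1 Hz2] Fz]].
  assert (E := Fexp z ltac:(lra)).
  assert (exp (- (c * (z - l))) < exp (- (c * (x - l)))) by (apply exp_increasing; nra).
  unfold bb in Ht1. lra. }
exists l. split; [split|split].
- intros x Hx. destruct (Rle_lt_dec l x) as [h|h]; auto. assert (F x <= 0) by (apply Fle0; lra). lra.
- intros m Hm. destruct (Rle_lt_dec m l) as [h|h]; auto. exfalso.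
  assert (A := Hm ((l + m) / 2) (Fgt0 ((l + m) / 2) ltac:(lra))). lra.
- intros x. exists (x + 1). split; [lra| apply Flt1].
- exists c. split; auto. intros x Hx. destruct Hx as [Hx| <-].
  + apply Fexp. split; [apply Fgt0; auto| apply Flt1].
  + replace (c * (l - l)) with 0 by ring. rewrite Ropp_0, exp_0.
    assert (F l <= 0) by (apply Fle0; lra). assert (0 <= F l) by auto. lra.
Qed.
Lemma RS_ext g H H' a b I : RS_integral g H a b I -> (forall t, a <= t -> H t = H' t) -> RS_integral g H' a b I.
Proof. intros R E eps He. destruct (R eps He) as [d [Hd Hd']]. exists d; split; auto.
 intros x xi N Hp. assert (A := Hd' x xi N Hp). destruct Hp as [HN [H0 [HNe Hp]]].
 assert (Hmono: forall i j, (i<=j)%nat -> (j<=N)%nat -> x i <= x j)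
   by (apply part_mono; intros; apply Hp; auto).
 rewrite rs_sum_sm in *. rewrite <- (sm_ext (fun i => g (xi i) * (H (x (S i)) - H (x i)))); auto.
 intros i Hi. rewrite !E; auto; rewrite <- H0; apply Hmono; lia. Qed.

Theorem mainTheorem3 (F : R -> R) (n k : nat)
  (hn : (2 <= n)%nat) (hk1 : (1 <= k)%nat) (hk2 : (k <= n - 1)%nat)
  (hF : is_cdf F) (hcont : continuity F) :
  (forall u v, lF_lt F u -> u < v -> lt_rF F v -> F u < F v ->
     cond_exp_is F k u v ((u + INR k * v) / (INR k + 1)))
  <->
  (exists l, is_lF F l /\ rF_infinite F /\
     exists c, c > 0 /\ forall x, l <= x -> F x = 1 - exp (- (c * (x - l)))).
Proof.
split.
- intros H. apply (forward F k hF hcont hk1 H).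
- intros [l [Hl [Hr [c [Hc Hform]]]]] u v Hu Huv Hv Fuv.
  destruct Hu as [x0 [Hx0 Fx0]].
  assert (Hlu : l < u) by (assert (l <= x0) by (apply (proj1 Hl); auto); lra).
  unfold cond_exp_is. apply RS_ext with (H := Gp u v k).
  + apply rs_power; auto.
  + intros t Ht.
    assert (Rh : forall s, l <= s -> Rhaz F s = c * (s - l)).
    { intros s Hs. unfold Rhaz. rewrite Hform by auto.
      replace (1 - (1 - exp (- (c * (s - l))))) with (exp (- (c * (s - l)))) by ring.
      rewrite ln_exp. ring. }
    unfold cond_cdf, Gp. rewrite !Rh by lra. f_equal.
    replace (c * (t - l) - c * (u - l)) with (c * (t - u)) by ring.
    replace (c * (v - l) - c * (u - l)) with (c * (v - u)) by ring.
    field. split; lra.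
Qed.
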